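(* For every $m\geq 2$, the Heisenberg Lie algebra $H(m)$ is not $2$-capable.
   Context: All Lie algebras are over a fixed field. The Heisenberg Lie algebra $H(m)$ is the Lie algebra of dimension $2m+1$ with $H(m)^2=Z(H(m))$ and $\dim H(m)^2=1$. A Lie algebra $L$ is $2$-capable if $L\cong H/Z_2(H)$ for some Lie algebra $H$, where $Z_2(H)$ is the second term of the upper central series of $H$. *)

(* Defs.v *)
From HB Require Import structures.
From mathcomp Require Import all_boot all_order all_algebra.
Set Implicit Arguments. Unset Strict Implicit. Unset Printing Implicit Defensive.
Import GRing.Theory.
Local Open Scope ring_scope.

Definition is_lie (F : fieldType) (V : lmodType F) (br : V -> V -> V) : Prop :=
  [/\ (forall (a : F) (x y z : V), br (a *: x + y) z = a *: br x z + br y z),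
      (forall (a : F) (x y z : V), br z (a *: x + y) = a *: br z x + br z y),
      (forall x : V, br x x = 0) &
      (forall x y z : V, br x (br y z) + br y (br z x) + br z (br x y) = 0)].

Definition lie_hom (F : fieldType) (V W : lmodType F)
  (brV : V -> V -> V) (brW : W -> W -> W) (f : V -> W) : Prop :=
  [/\ (forall (a : F) (x y : V), f (a *: x + y) = a *: f x + f y) &
      (forall x y : V, f (brV x y) = brW (f x) (f y))].

Definition in_center (F : fieldType) (V : lmodType F) (br : V -> V -> V) (x : V) : Prop :=
  forall y : V, br x y = 0.

Definition in_center2 (F : fieldType) (V : lmodType F) (br : V -> V -> V) (x : V) : Prop :=
  forall y : V, in_center br (br x y).

(* Derived algebra L^2 = [L,L] of a finite-dimensional Lie algebra: the span of
   all brackets, i.e. of the brackets of basis vectors. *)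
Definition derived (F : fieldType) (L : vectType F) (br : L -> L -> L) : {vspace L} :=
  <<[seq br u v | u <- (vbasis (fullv : {vspace L}) : seq L),
                  v <- (vbasis (fullv : {vspace L}) : seq L)]>>%VS.

Definition is_heisenberg (F : fieldType) (L : vectType F) (br : L -> L -> L) (m : nat) : Prop :=
  [/\ is_lie br,
      \dim (fullv : {vspace L}) = (2 * m + 1)%N,
      (forall x : L, x \in derived br <-> in_center br x) &
      \dim (derived br) = 1%N].

(* L is 2-capable: L ≅ H / Z_2(H) for some Lie algebra H, expressed (first
   isomorphism theorem) as a surjective Lie homomorphism H -> L with kernel Z_2(H). *)
Definition two_capable (F : fieldType) (L : vectType F) (br : L -> L -> L) : Prop :=
  exists (H : lmodType F) (brH : H -> H -> H) (f : H -> L),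
    [/\ is_lie brH, lie_hom brH br f, (forall y : L, exists x : H, f x = y) &
        (forall x : H, f x = 0 <-> in_center2 brH x)].

(* Main.v *)
Require Import Defs.
From HB Require Import structures.
From mathcomp Require Import all_boot all_order all_algebra.
Set Implicit Arguments. Unset Strict Implicit. Unset Printing Implicit Defensive.
Import GRing.Theory.
Local Open Scope ring_scope.

Lemma br0l (F : fieldType) (V : lmodType F) (br : V -> V -> V) :
  is_lie br -> forall y, br 0 y = 0.
Proof. case=> Hl _ _ _ y. have := Hl 1 0 0 y. rewrite scaler0 addr0 scale1r => h.
by apply: (@addrI _ (br 0 y)); rewrite addr0 -h. Qed.
Lemma br0r (F : fieldType) (V : lmodType F) (br : V -> V -> V) :
  is_lie br -> forall y, br y 0 = 0.
Proof. case=> _ Hl _ _ y. have := Hl 1 0 0 y. rewrite scaler0 addr0 scale1r => h.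
by apply: (@addrI _ (br y 0)); rewrite addr0 -h. Qed.
Lemma brDl (F : fieldType) (V : lmodType F) (br : V -> V -> V) :
  is_lie br -> forall x y z, br (x + y) z = br x z + br y z.
Proof. move=> H x y z; case: (H) => Hl _ _ _. by have := Hl 1 x y z; rewrite !scale1r. Qed.
Lemma brDr (F : fieldType) (V : lmodType F) (br : V -> V -> V) :
  is_lie br -> forall x y z, br z (x + y) = br z x + br z y.
Proof. move=> H x y z; case: (H) => _ Hl _ _. by have := Hl 1 x y z; rewrite !scale1r. Qed.
Lemma brZl (F : fieldType) (V : lmodType F) (br : V -> V -> V) :
  is_lie br -> forall a x z, br (a *: x) z = a *: br x z.
Proof. move=> H a x z; case: (H) => Hl _ _ _. by have := Hl a x 0 z; rewrite addr0 br0l // addr0. Qed.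
Lemma brZr (F : fieldType) (V : lmodType F) (br : V -> V -> V) :
  is_lie br -> forall a x z, br z (a *: x) = a *: br z x.
Proof. move=> H a x z; case: (H) => _ Hl _ _. by have := Hl a x 0 z; rewrite addr0 br0r // addr0. Qed.
Lemma brNl (F : fieldType) (V : lmodType F) (br : V -> V -> V) :
  is_lie br -> forall x z, br (- x) z = - br x z.
Proof. by move=> H x z; rewrite -scaleN1r brZl // scaleN1r. Qed.
Lemma brNr (F : fieldType) (V : lmodType F) (br : V -> V -> V) :
  is_lie br -> forall x z, br z (- x) = - br z x.
Proof. by move=> H x z; rewrite -scaleN1r brZr // scaleN1r. Qed.
Lemma brBl (F : fieldType) (V : lmodType F) (br : V -> V -> V) :
  is_lie br -> forall x y z, br (x - y) z = br x z - br y z.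
Proof. by move=> H x y z; rewrite brDl // brNl. Qed.
Lemma brBr (F : fieldType) (V : lmodType F) (br : V -> V -> V) :
  is_lie br -> forall x y z, br z (x - y) = br z x - br z y.
Proof. by move=> H x y z; rewrite brDr // brNr. Qed.
Lemma brA (F : fieldType) (V : lmodType F) (br : V -> V -> V) :
  is_lie br -> forall x y, br x y = - br y x.
Proof. move=> H x y; case: (H) => _ _ Ha _.
have := Ha (x + y); rewrite !(brDl H) !(brDr H) !Ha add0r addr0 => /eqP.
by rewrite addr_eq0 => /eqP. Qed.
Lemma brsuml (F : fieldType) (V : lmodType F) (br : V -> V -> V) (I : Type) (r : seq I) (P : pred I) (G : I -> V) y :
  is_lie br -> br (\sum_(i <- r | P i) G i) y = \sum_(i <- r | P i) br (G i) y.
Proof. move=> H; apply: (big_morph (br^~ y)); [exact: (fun a b => brDl H a b y) | exact: br0l]. Qed.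
Lemma brsumr (F : fieldType) (V : lmodType F) (br : V -> V -> V) (I : Type) (r : seq I) (P : pred I) (G : I -> V) y :
  is_lie br -> br y (\sum_(i <- r | P i) G i) = \sum_(i <- r | P i) br y (G i).
Proof. move=> H; apply: (big_morph (br y)); [exact: (fun a b => brDr H a b y) | exact: br0r]. Qed.
Lemma br_der (F : fieldType) (L : vectType F) (br : L -> L -> L) :
  is_lie br -> forall u v, br u v \in derived br.
Proof.
move=> H u v.
rewrite (coord_vbasis (memvf u)) (coord_vbasis (memvf v)) (brsuml _ _ _ _ H).
apply: memv_suml => i _; rewrite (brZl H) (brsumr _ _ _ _ H); apply: memvZ.
apply: memv_suml => j _; rewrite (brZr H); apply: memvZ.
apply: memv_span; apply: allpairs_f; apply: mem_nth; by rewrite size_tuple.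
Qed.
Lemma hom_add (F : fieldType) (V W : lmodType F) brV brW (f : V -> W) :
  lie_hom brV brW f -> forall x y, f (x + y) = f x + f y.
Proof. by case=> Hf _ x y; have := Hf 1 x y; rewrite !scale1r. Qed.
Lemma hom_0 (F : fieldType) (V W : lmodType F) brV brW (f : V -> W) :
  lie_hom brV brW f -> f 0 = 0.
Proof. move=> Hf; have := hom_add Hf 0 0; rewrite addr0 => h.
by apply: (@addrI _ (f 0)); rewrite addr0 -h. Qed.
Lemma hom_N (F : fieldType) (V W : lmodType F) brV brW (f : V -> W) :
  lie_hom brV brW f -> forall x, f (- x) = - f x.
Proof. move=> Hf x; case: (Hf) => Hl _; have := Hl (-1) x 0.
by rewrite !addr0 (hom_0 Hf) addr0 !scaleN1r. Qed.
Lemma hom_B (F : fieldType) (V W : lmodType F) brV brW (f : V -> W) :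
  lie_hom brV brW f -> forall x y, f (x - y) = f x - f y.
Proof. by move=> Hf x y; rewrite (hom_add Hf) (hom_N Hf). Qed.

Lemma Z_add (F : fieldType) (V : lmodType F) (br : V -> V -> V) :
  is_lie br -> forall a b, in_center br a -> in_center br b -> in_center br (a + b).
Proof. by move=> H a b ha hb y; rewrite (brDl H) ha hb addr0. Qed.
Lemma Z_N (F : fieldType) (V : lmodType F) (br : V -> V -> V) :
  is_lie br -> forall a, in_center br a -> in_center br (- a).
Proof. by move=> H a ha y; rewrite (brNl H) ha oppr0. Qed.

Lemma H_part (F : fieldType) (H : lmodType F) (brH : H -> H -> H) (L : lmodType F)
  (br : L -> L -> L) (f : H -> L) :
  is_lie brH -> is_lie br -> lie_hom brH br f -> (forall y : L, exists x : H, f x = y) ->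
  (forall x : H, f x = 0 <-> in_center2 brH x) ->
  forall x1 y1 x2 y2, br x1 y1 = br x2 y2 ->
  (forall u, exists u1 u2, u = u1 + u2 /\ br u1 x1 = 0 /\ br u1 y1 = 0 /\
                          br u2 x2 = 0 /\ br u2 y2 = 0) ->
  br x1 y1 = 0.
Proof.
move=> HH HL Hf Hs Hk x1 y1 x2 y2 Heq Hd.
have kerZ1 : forall e k, f e = 0 -> in_center brH (brH e k).
  by move=> e k /Hk; apply.
have kerZ2 : forall e k, f e = 0 -> in_center brH (brH k e).
  by move=> e k /Hk he; rewrite (brA HH); apply: Z_N => //; apply: he.
have fbr : forall a b, f (brH a b) = br (f a) (f b) by case: Hf.
have jac : forall a b k, f (brH b k) = 0 -> f (brH k a) = 0 ->
    in_center brH (brH (brH a b) k).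
  move=> a b k h1 h2; rewrite (brA HH); apply: Z_N => //.
  case: (HH) => _ _ _ J.
  have -> : brH k (brH a b) = - brH a (brH b k) - brH b (brH k a).
    by rewrite -[LHS]subr0 -(J k a b) !opprD !addrA subrr add0r.
  by apply: Z_add => //; apply: Z_N => //; [apply: (kerZ2 _ _ h1) | apply: (kerZ2 _ _ h2)].
have [a1 fa1] := Hs x1; have [b1 fb1] := Hs y1.
have [a2 fa2] := Hs x2; have [b2 fb2] := Hs y2.
suff : in_center2 brH (brH a1 b1) by move/Hk; rewrite fbr fa1 fb1.
move=> k.
have [u1 [u2 [hu [h1 [h2 [h3 h4]]]]]] := Hd (f k).
have [k1 fk1] := Hs u1; have [k2 fk2] := Hs u2.
have -> : k = k1 + k2 + (k - k1 - k2) by rewrite -[k - k1 - k2]addrA -opprD [RHS]addrC subrK.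
have fe : f (k - k1 - k2) = 0.
  by rewrite !(hom_B Hf) hu fk1 fk2 -[u1 + u2 - u1 - u2]addrA -opprD subrr.
move: fe; set e := k - k1 - k2 => fe; clearbody e.
rewrite !(brDr HH); apply: Z_add => //; [apply: Z_add => // |]; last first.
  exact: kerZ2.
have -> : brH a1 b1 = (brH a1 b1 - brH a2 b2) + brH a2 b2 by rewrite subrK.
  rewrite (brDl HH); apply: Z_add => //.
    by apply: kerZ1; rewrite (hom_B Hf) !fbr fa1 fb1 fa2 fb2 Heq subrr.
  apply: jac; rewrite fbr ?fa2 ?fb2 fk2 //; by rewrite (brA HL) h4 oppr0.
apply: jac; rewrite fbr ?fa1 ?fb1 fk1 //; by rewrite (brA HL) h2 oppr0.
Qed.
From Stdlib Require Import Classical.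
From mathcomp Require Import zify.

Lemma L_part (F : fieldType) (m : nat) (L : vectType F) (br : L -> L -> L) :
  (2 <= m)%N -> is_heisenberg br m ->
  exists x1 y1 x2 y2, [/\ br x1 y1 != 0, br x1 y1 = br x2 y2 &
  (forall u, exists u1 u2, u = u1 + u2 /\ br u1 x1 = 0 /\ br u1 y1 = 0 /\
                          br u2 x2 = 0 /\ br u2 y2 = 0)].
Proof.
move=> m2 [HL dimL Hc dimD].
set z := vpick (derived br).
have z0 : z != 0 by rewrite vpick0 -dimv_eq0 dimD.
have Dz : derived br = <[z]>%VS.
  apply/eqP; rewrite eq_sym eqEdim dim_vline z0 dimD leqnn andbT.
  by rewrite -memvE memv_pick.
have coef : forall u v, exists a, br u v = a *: z.
  by move=> u v; apply/vlineP; rewrite -Dz br_der.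
have cen : forall x, in_center br x -> x \in <[z]>%VS.
  by move=> x /Hc; rewrite Dz.
have notcen : forall x, x \notin <[z]>%VS -> exists y, br x y = z.
  move=> x xz; have [y hy] : exists y, br x y != 0.
    apply: NNPP => hn; move/negP: xz; apply; apply: cen => y.
    by apply/eqP; apply: negbNE; apply/negP => hy; apply: hn; exists y.
  have [a ha] := coef x y.
  have a0 : a != 0 by apply: contraNneq hy => a0; rewrite ha a0 scale0r.
  by exists (a^-1 *: y); rewrite (brZr HL) ha scalerA mulVf // scale1r.
have [x1 _ x1z] : exists2 x1, x1 \in fullv & x1 \notin <[z]>%VS.
  apply/subvPn; apply/negP => sub; move: (dimvS sub).
  rewrite dimL dim_vline z0 /=; lia.
have [y1 hxy1] := notcen x1 x1z.
have dec : forall u, exists v, br (u - v) x1 = 0 /\ br (u - v) y1 = 0 /\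
     v \in <<[:: x1; y1]>>%VS.
  move=> u; have [p hp] := coef u x1; have [q hq] := coef u y1.
  exists (q *: x1 - p *: y1); split; last split.
  - rewrite !(brBl HL) !(brZl HL) hp; case: (HL) => _ _ -> _.
    rewrite scaler0 sub0r (brA HL) hxy1 scalerN opprK subrr //.
  - rewrite !(brBl HL) !(brZl HL) hq hxy1; case: (HL) => _ _ -> _.
    by rewrite scaler0 subr0 subrr.
  - by apply: rpredB; apply: rpredZ; apply: memv_span; rewrite !inE eqxx ?orbT.
have [x2 [hx21 [hx22 x2z]]] : exists x2, br x2 x1 = 0 /\ br x2 y1 = 0 /\ x2 \notin <[z]>%VS.
  apply: NNPP => hn.
  have : (fullv <= <<[:: z; x1; y1]>>%VS)%VS.
    apply/subvP => u _; have [v [h1 [h2 hv]]] := dec u.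
    have uz : u - v \in <[z]>%VS.
      apply: NNPP => hu; apply: hn; exists (u - v); split => //; split => //.
      by apply/negP.
    rewrite -[u](subrK v) span_cons; apply: memv_add => //.
  move/dimvS; rewrite dimL => h; have := leq_trans h (dim_span _).
  rewrite /= in h *; lia.
have [y hy] := notcen x2 x2z.
have [v [h1 [h2 hv]]] := dec y.
have e1 : forall w, w \in <<[:: x1; y1]>>%VS -> br x2 w = 0.
  move=> w /coord_span ->; rewrite (brsumr _ _ _ _ HL) big1 // => i _.
  rewrite (brZr HL); case: i => [[|[|i]] hi] //=.
  - by rewrite hx21 scaler0.
  - by rewrite hx22 scaler0.
have e2 : forall w, w \in <<[:: x1; y1]>>%VS -> br (y - v) w = 0.
  move=> w /coord_span ->; rewrite (brsumr _ _ _ _ HL) big1 // => i _.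
  rewrite (brZr HL); case: i => [[|[|i]] hi] //=.
  - by rewrite h1 scaler0.
  - by rewrite h2 scaler0.
exists x1, y1, x2, (y - v); split.
- by rewrite hxy1.
- by rewrite (brBr HL) (e1 _ hv) subr0 hy.
- move=> u; have [w [hw1 [hw2 hw]]] := dec u.
  exists (u - w), w; split; first by rewrite subrK.
  split => //; split => //; split.
  + by rewrite (brA HL) (e1 _ hw) oppr0.
  + by rewrite (brA HL) (e2 _ hw) oppr0.
Qed.

Unset Implicit Arguments.
Theorem corollary2p9 (F : fieldType) (m : nat) (L : vectType F) (br : L -> L -> L) :
  (2 <= m)%N -> is_heisenberg br m -> ~ two_capable br.
Proof.
move=> m2 Hh [H [brH [f [HH Hf Hs Hk]]]].
have [x1 [y1 [x2 [y2 [nz heq hd]]]]] := L_part m2 Hh.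
case: Hh => HL _ _ _.
by move/eqP: nz; apply; apply: (H_part HH HL Hf Hs Hk heq hd).
Qed.
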